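(* Let $\theta\in\mathbb{R}$, let $G$ be a graph with maximum degree at most $D$, and let $u$ be a $\theta$-positive vertex of $G$. Then $\nu_{G,u}$ has no extended states at $\theta$, i.e. \[\lim_{\varepsilon\to0+}\frac{\nu_{G,u}([\theta-\varepsilon,\theta+\varepsilon])-\nu_{G,u}(\{\theta\})}{\varepsilon}=0.\]
   Context: Matching measure: for a (not necessarily connected) graph $G$ and vertex $u$, $\nu_{G,u}$ is the spectral measure at the one-vertex path $u$ of the adjacency operator of the path tree $T(G,u)$ (vertices: finite paths in $G$ starting at $u$; two paths adjacent iff one is obtained from the other by deleting its last vertex). $G-u$ denotes $G$ with $u$ deleted. A vertex $u$ is $\theta$-positive in $G$ if $\sum_{v\sim u}\nu_{G-u,v}(\{\theta\})>0$, the sum over neighbors $v$ of $u$. *)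

(* Defs.v *)
From HB Require Import structures.
From mathcomp Require Import all_boot all_order all_algebra.
From mathcomp Require Import all_classical all_reals all_analysis.
Set Implicit Arguments. Unset Strict Implicit. Unset Printing Implicit Defensive.
Import Order.TTheory GRing.Theory Num.Theory.
Local Open Scope classical_set_scope.
Local Open Scope ring_scope.

(* A locally finite (possibly infinite) simple graph on vertex type V is given
   by its neighbourhood lists N v. *)
Definition simple_graph (V : eqType) (N : V -> seq V) : Prop :=
  [/\ forall v, uniq (N v),
      forall v, v \notin N v &
      forall v w, w \in N v -> v \in N w].

(* G - u : delete vertex u (u becomes isolated, and is removed from all
   neighbourhoods; it is never reached from any other vertex). *)
Definition del_vertex (V : eqType) (N : V -> seq V) (u : V) : V -> seq V :=
  fun v => if v == u then [::] else [seq w <- N v | w != u].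

(* Path tree T(G,u): vertices are (self-avoiding) paths in G starting at u,
   stored REVERSED: the head of the list is the last vertex of the path. *)
Definition ptree_nbrs (V : eqType) (N : V -> seq V) (p : seq V) : seq (seq V) :=
  match p with
  | [::] => [::]
  | x :: q => [seq w :: p | w <- N x & w \notin p] ++
              (if q is _ :: _ then [:: q] else [::])
  end.

Fixpoint ptree_walks (V : eqType) (N : V -> seq V) (k : nat) (p r : seq V) : nat :=
  match k with
  | 0 => (p == r)
  | k'.+1 => \sum_(s <- ptree_nbrs N p) ptree_walks N k' s r
  end.

(* <A^k delta_root, delta_root> for the adjacency operator A of T(G,u):
   number of closed walks of length k at the root path [:: u]. *)
Definition ptree_moment (V : eqType) (N : V -> seq V) (u : V) (k : nat) : nat :=
  ptree_walks N k [:: u] [:: u].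

(* nu is the matching measure nu_{G,u}: the spectral measure of the (bounded,
   self-adjoint) adjacency operator of T(G,u) at the root, i.e. the Borel
   measure on R with int x^k dnu = <A^k delta_root, delta_root> for all k
   (unique, since A is bounded so the moment problem is determinate). *)
Definition is_matching_measure (R : realType) (V : eqType) (N : V -> seq V)
  (u : V) (nu : {measure set R -> \bar R}) : Prop :=
  forall k : nat,
    nu.-integrable setT (fun x : R => (x ^+ k)%:E) /\
    (\int[nu]_x (x ^+ k)%:E = ((ptree_moment N u k)%:R)%:E)%E.

(* Main.v *)
Require Import Defs.
From HB Require Import structures.
From mathcomp Require Import all_boot all_order all_algebra.
From mathcomp Require Import all_classical all_reals all_analysis.
Import Order.TTheory GRing.Theory Num.Theory.
Local Open Scope classical_set_scope.
Local Open Scope ring_scope.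

From mathcomp Require Import ring lra.
Import numFieldNormedType.Exports.

Module PA.
Set Implicit Arguments. Unset Strict Implicit. Unset Printing Implicit Defensive.
Local Close Scope ring_scope.
Local Close Scope classical_set_scope.
Section Comb.
Variables (V : eqType) (N : V -> seq V) (u : V).
Let N' := del_vertex N u.

Lemma N'E x : x != u -> N' x = [seq w <- N x | w != u].
Proof. by rewrite /N' /del_vertex => /negbTE ->. Qed.

Lemma walks_sub v : v \in N u -> forall k p, p != [::] -> u \notin p -> last u p = v ->
  ptree_walks N k (p ++ [:: u]) [:: u] =
  \sum_(j < k) ptree_moment N u j * ptree_walks N' (k.-1 - j) p [:: v].
Proof.
move=> vN k; elim: k => [|k IH] p.
  case: p => [|x q] //= _ _ _; rewrite big_ord0 eqseq_cons.
  by case: q => [|y q]; rewrite /= ?andbF.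
case: p => // x q _; rewrite inE negb_or => /andP[ux uq] lastp.
rewrite [LHS]/= /ptree_nbrs.
have -> : (if q ++ [:: u] is _ :: _ then [:: q ++ [:: u]] else [::]) = [:: q ++ [:: u]].
  by case: q {lastp uq}.
rewrite big_cat big_seq1 big_map.
rewrite big_ord_recr /=.
have E1 : forall i : 'I_k, ptree_walks N' (k - i) (x :: q) [:: v] =
   \sum_(s <- ptree_nbrs N' (x :: q)) ptree_walks N' (k.-1 - i) s [:: v].
  move=> i; have -> : k - i = (k.-1 - i).+1.
    by case: k i IH => [[]//|k'] i _; rewrite /= subSn // -ltnS.
  by [].


rewrite [X in _ = X + _](eq_bigr (fun i : 'I_k => \sum_(s <- ptree_nbrs N' (x :: q))
   ptree_moment N u i * ptree_walks N' (k.-1 - i) s [:: v])); last first.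
  by move=> i _; rewrite E1 big_distrr.
rewrite exchange_big /= /ptree_nbrs big_cat /= big_map.
have ->: [seq w <- N x | w \notin x :: q ++ [:: u]] = [seq w <- N' x | w \notin x :: q].
  rewrite N'E 1?eq_sym // -filter_predI; apply: eq_filter => w /=.
  by rewrite !inE mem_cat inE !negb_or andbA.
rewrite -addnA; congr (_ + _).
  rewrite big_seq_cond [RHS]big_seq_cond; apply: eq_bigr => w /andP[+ _].
  rewrite mem_filter => /andP[wx]; rewrite N'E 1?eq_sym // mem_filter => /andP[wu _].
  rewrite -(IH (w :: x :: q)) //.
  by rewrite inE negb_or eq_sym wu inE negb_or ux.
clear E1; case: q uq lastp => [|y q] uq lastp /=.
  by move: lastp => /= <-; rewrite big_nil add0n subnn /= eqxx muln1.
rewrite big_seq1 -IH // subnn /=.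
by rewrite (_ : (_ == _) = false) ?muln0 ?addn0 // eqseq_cons andbC.
Qed.


Lemma mom_rec : u \notin N u -> forall k, ptree_moment N u k.+1 =
  \sum_(j < k) ptree_moment N u j * \sum_(v <- N u) ptree_moment N' v (k.-1 - j).
Proof.
move=> uN k; rewrite /ptree_moment [LHS]/= /ptree_nbrs cats0 big_map.
have -> : [seq w <- N u | w \notin [:: u]] = N u.
  apply/all_filterP/allP => w wN; rewrite inE; apply/eqP => uw.
  by rewrite uw in wN; rewrite wN in uN.
rewrite big_seq.
rewrite (eq_bigr (fun w => \sum_(j < k) ptree_moment N u j * ptree_walks N' (k.-1 - j) [:: w] [:: w])); last first.
  move=> w wN; have /= H := @walks_sub w wN k [:: w]; apply: H => //.
  by rewrite inE; apply/eqP => uw; rewrite -uw in wN; rewrite wN in uN.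
rewrite -big_seq exchange_big; apply: eq_bigr => j _.
by rewrite big_distrr.
Qed.

Lemma walks_bound D : (forall x, size (N x) <= D) -> forall k p r,
  ptree_walks N k p r <= D.+1 ^ k.
Proof.
move=> ND; elim=> [|k IH] p r /=; first by case: (p == r).
apply: (@leq_trans (\sum_(s <- ptree_nbrs N p) D.+1 ^ k)); first exact: leq_sum.
rewrite big_const_seq iter_addn_0 expnS mulnC leq_mul2r; apply/orP; right.
case: p => [|x q] //=; rewrite count_predT size_cat size_map.
rewrite -addn1; apply: leq_add; first by apply: leq_trans (ND x); rewrite size_filter; exact: count_size.
by case: q.
Qed.
End Comb.
End PA.
Import PA.

Module PB.
Set Implicit Arguments. Unset Strict Implicit. Unset Printing Implicit Defensive.
Local Close Scope classical_set_scope.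
Section Alg.
Variable R : comNzRingType.
Implicit Types (p q : {poly R}) (F : nat -> {poly R}) (w : nat -> R).

Definition lin F q : {poly R} := \sum_(i < size q) q`_i *: F i.
Definition mom w q : R := \sum_(i < size q) q`_i * w i.

Lemma linE F q n : (size q <= n)%N -> lin F q = \sum_(i < n) q`_i *: F i.
Proof.
move=> H; rewrite /lin (big_ord_widen n (fun i => q`_i *: F i) H) big_mkcond.
apply: eq_bigr => i _; case: ifP => // /negbT; rewrite -leqNgt => Hi.
by rewrite nth_default // scale0r.
Qed.

Lemma momE w q n : (size q <= n)%N -> mom w q = \sum_(i < n) q`_i * w i.
Proof.
move=> H; rewrite /mom (big_ord_widen n (fun i => q`_i * w i) H) big_mkcond.
apply: eq_bigr => i _; case: ifP => // /negbT; rewrite -leqNgt => Hi.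
by rewrite nth_default // mul0r.
Qed.

Lemma eq_lin F1 F2 p : (forall i, F1 i = F2 i) -> lin F1 p = lin F2 p.
Proof. by move=> H; apply: eq_bigr => i _; rewrite H. Qed.
Lemma eq_mom w1 w2 p : (forall i, w1 i = w2 i) -> mom w1 p = mom w2 p.
Proof. by move=> H; apply: eq_bigr => i _; rewrite H. Qed.

Lemma lin0 F : lin F 0 = 0.
Proof. by rewrite /lin size_poly0 big_ord0. Qed.
Lemma mom0 w : mom w 0 = 0.
Proof. by rewrite /mom size_poly0 big_ord0. Qed.

Lemma linD F p q : lin F (p + q) = lin F p + lin F q.
Proof.
set n := maxn (size p) (size q).
rewrite (linE _ (size_polyD p q)) (@linE _ p n) ?leq_maxl // (@linE _ q n) ?leq_maxr //.
by rewrite -big_split; apply: eq_bigr => i _; rewrite coefD scalerDl.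
Qed.

Lemma momD w p q : mom w (p + q) = mom w p + mom w q.
Proof.
set n := maxn (size p) (size q).
rewrite (momE _ (size_polyD p q)) (@momE _ p n) ?leq_maxl // (@momE _ q n) ?leq_maxr //.
by rewrite -big_split; apply: eq_bigr => i _; rewrite coefD mulrDl.
Qed.

Lemma linZ F c p : lin F (c *: p) = c *: lin F p.
Proof.
rewrite (linE _ (size_scale_leq c p)) /lin scaler_sumr.
by apply: eq_bigr => i _; rewrite coefZ scalerA.
Qed.

Lemma momZ w c p : mom w (c *: p) = c * mom w p.
Proof.
rewrite (momE _ (size_scale_leq c p)) /mom mulr_sumr.
by apply: eq_bigr => i _; rewrite coefZ mulrA.
Qed.

Lemma linN F p : lin F (- p) = - lin F p.
Proof. by rewrite -scaleN1r linZ scaleN1r. Qed.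
Lemma momN w p : mom w (- p) = - mom w p.
Proof. by rewrite -scaleN1r momZ mulN1r. Qed.

Lemma linB F p q : lin F (p - q) = lin F p - lin F q.
Proof. by rewrite linD linN. Qed.
Lemma momB w p q : mom w (p - q) = mom w p - mom w q.
Proof. by rewrite momD momN. Qed.

Lemma size_mulX_leq p : (size (p * 'X)%R <= (size p).+1)%N.
Proof. by have [->|/size_mulX ->//] := eqVneq p 0; rewrite mul0r size_poly0. Qed.

Lemma lin_mulX F p : lin F (p * 'X) = lin (fun i => F i.+1) p.
Proof.
rewrite (linE _ (size_mulX_leq p)) big_ord_recl coefMX /= scale0r add0r.
by apply: eq_bigr => i _; rewrite coefMX /=.
Qed.

Lemma mom_mulX w p : mom w (p * 'X) = mom (fun i => w i.+1) p.
Proof.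
rewrite (momE _ (size_mulX_leq p)) big_ord_recl coefMX /= mul0r add0r.
by apply: eq_bigr => i _; rewrite coefMX /=.
Qed.

Lemma linC F c : lin F c%:P = c *: F 0%N.
Proof. by rewrite (linE _ (size_polyC_leq1 c)) big_ord1 coefC. Qed.
Lemma momC w c : mom w c%:P = c * w 0%N.
Proof. by rewrite (momE _ (size_polyC_leq1 c)) big_ord1 coefC. Qed.

Lemma momZXn w c n : mom w (c *: 'X^n) = c * w n.
Proof.
rewrite momZ (momE _ (n := n.+1)) ?size_polyXn // big_ord_recr /=.
rewrite big1 ?add0r ?coefXn ?eqxx ?mul1r // => i _.
by rewrite coefXn (ltn_eqF (ltn_ord i)) mul0r.
Qed.

Lemma mom_sum w n (Q : 'I_n -> {poly R}) :
  mom w (\sum_(i < n) Q i) = \sum_(i < n) mom w (Q i).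
Proof.
elim: n Q => [|n IH] Q; first by rewrite !big_ord0 mom0.
by rewrite !big_ord_recr momD IH.
Qed.

Lemma mom_lin w F p : mom w (lin F p) = mom (fun i => mom w (F i)) p.
Proof. by rewrite /lin mom_sum; apply: eq_bigr => i _; rewrite momZ. Qed.

Lemma lin_addF F1 F2 p : lin (fun i => F1 i + F2 i) p = lin F1 p + lin F2 p.
Proof. by rewrite /lin -big_split; apply: eq_bigr => i _; rewrite scalerDr. Qed.

Lemma lin_mulF a F p : lin (fun i => a * F i) p = a * lin F p.
Proof. by rewrite /lin mulr_sumr; apply: eq_bigr => i _; rewrite scalerAr. Qed.

Lemma lin_constF w p : lin (fun i => (w i)%:P) p = (mom w p)%:P.
Proof.
rewrite /lin /mom (big_morph (fun x : R => x%:P) (@polyCD R) (@polyC0 R)).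
by apply: eq_bigr => i _; rewrite polyCM mul_polyC.
Qed.

Lemma mom_wsum (I : Type) (l : seq I) (W : I -> nat -> R) p :
  mom (fun i => \sum_(v <- l) W v i) p = \sum_(v <- l) mom (W v) p.
Proof.
rewrite /mom exchange_big /=; apply: eq_bigr => i _.
by rewrite mulr_sumr.
Qed.

Lemma horner_mom p x : p.[x] = mom (fun i => x ^+ i) p.
Proof. by rewrite horner_coef. Qed.

Lemma horner_lin F p x : (lin F p).[x] = mom (fun i => (F i).[x]) p.
Proof.
rewrite /lin horner_sum; apply: eq_bigr => i _; by rewrite hornerZ.
Qed.

Section Core.
Variables (m s : nat -> R).
Hypothesis hm0 : m 0%N = 1.
Hypothesis hrec : forall a, m a.+1 = \sum_(j < a) m j * s (a.-1 - j)%N.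

Definition Gp i : {poly R} := \sum_(j < i) m j *: 'X^(i.-1 - j).
Definition rp := lin Gp.

Lemma Gp0 : Gp 0 = 0.
Proof. by rewrite /Gp big_ord0. Qed.

Lemma GpS i : Gp i.+1 = 'X * Gp i + (m i)%:P.
Proof.
rewrite /Gp big_ord_recr /= subnn expr0 alg_polyC mulr_sumr; congr (_ + _).
apply: eq_bigr => j _; rewrite -scalerAr -exprS; congr (_ *: 'X^_).
by case: i j => [[]//|i] j; rewrite /= subSn // -ltnS.
Qed.

Lemma mom_s_Gp i : mom s (Gp i) = m i.+1.
Proof. by rewrite hrec /Gp mom_sum; apply: eq_bigr => j _; rewrite momZXn. Qed.

Lemma rp_mulX p : rp (p * 'X) = 'X * rp p + (mom m p)%:P.
Proof.
rewrite /rp lin_mulX (eq_lin _ GpS).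
by rewrite lin_addF lin_mulF lin_constF.
Qed.

Lemma rpC c : rp c%:P = 0.
Proof. by rewrite /rp linC Gp0 scaler0. Qed.

Lemma mom_s_rp p : mom s (rp p) = mom m (p * 'X).
Proof. by rewrite /rp mom_lin mom_mulX; apply: eq_mom => i; rewrite mom_s_Gp. Qed.

Lemma core p q :
  mom m (p * q) = mom m p * mom m q + mom s (rp p * rp q).
Proof.
suff H : forall p q, mom m (p * q) - mom m p * mom m q - mom s (rp p * rp q) = 0.
  by apply/eqP; rewrite -subr_eq0 opprD addrA H.
move=> {}p {}q.
elim/poly_ind: p q => [|p c IH] q.
  by rewrite /rp lin0 !mul0r !mom0 mul0r !subr0.
rewrite /rp linD -/rp rp_mulX rpC addr0.
rewrite mulrDl momD (mul_polyC c q) momZ.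
rewrite momD momC hm0 mulr1.
rewrite (mulrDl ('X * rp p)) (momD s) mul_polyC momZ mom_s_rp.
have := IH (q * 'X).
rewrite rp_mulX (mulrDr (rp p)) (momD s) (mulrC (rp p) (_%:P)) mul_polyC momZ mom_s_rp.
rewrite (mulrC q 'X) (mulrA p 'X q) (mulrA (rp p) 'X (rp q)) (mulrC (rp p) 'X) => IH'.
rewrite -[RHS]IH'; ring.
Qed.

Lemma core2 q : mom m (q * q) = mom m q ^+ 2 + mom s (rp q * rp q).
Proof. by rewrite core expr2. Qed.

Lemma rp_theta (t : R) p : (rp (('X - t%:P) * p)).[t] = mom m p.
Proof.
rewrite mulrBl mul_polyC mulrC /rp linB linZ -/rp rp_mulX.
rewrite (mulrC 'X) hornerD hornerN hornerD hornerZ hornerC hornerMX; ring.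
Qed.

End Core.
End Alg.
End PB.
Import PB.

Module PD.
Set Implicit Arguments. Unset Strict Implicit. Unset Printing Implicit Defensive.
Section Bern.
Variable R : realFieldType.

Lemma bern_lo (y : R) n : 0 <= y <= 1 -> 1 - n%:R * y <= (1 - y) ^+ n.
Proof.
case/andP=> y0 y1; elim: n => [|n IH]; first by rewrite mul0r subr0 expr0.
rewrite exprS -natr1.
have h1 : 0 <= 1 - y by lra.
have := ler_wpM2l h1 IH.
have : 0 <= n%:R * y * y by rewrite mulr_ge0 // mulr_ge0.
nra.
Qed.

Lemma bern_up (y : R) n : 0 <= y -> 1 + n%:R * y <= (1 + y) ^+ n.
Proof.
move=> y0; elim: n => [|n IH]; first by rewrite mul0r addr0 expr0.
rewrite exprS -natr1.
have h1 : 0 <= 1 + y by lra.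
have := ler_wpM2l h1 IH.
have : 0 <= n%:R * y * y by rewrite mulr_ge0 // mulr_ge0.
nra.
Qed.

Lemma bern2 (y : R) n : 0 <= y <= 1 -> n%:R * y * (1 - y) ^+ n <= 1.
Proof.
case/andP=> y0 y1.
have h1 : 0 <= (1 - y) ^+ n by rewrite exprn_ge0 // subr_ge0.
apply: (@le_trans _ _ ((1 + n%:R * y) * (1 - y) ^+ n)).
  by rewrite ler_wpM2r // lerDr.
apply: (@le_trans _ _ ((1 + y) ^+ n * (1 - y) ^+ n)).
  by rewrite ler_wpM2r // bern_up.
rewrite -exprMn; apply: exprn_ile1; nra.
Qed.
End Bern.
End PD.
Import PD.

Module PC.
Set Implicit Arguments. Unset Strict Implicit. Unset Printing Implicit Defensive.
Section Meas.
Variable R : realType.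
Implicit Types (nu : {measure set R -> \bar R}) (w : nat -> R).

Definition hasmom nu w := forall k : nat,
    nu.-integrable setT (fun x : R => (x ^+ k)%:E) /\
    (\int[nu]_x (x ^+ k)%:E = (w k)%:E)%E.

Lemma poly_int nu w (H : hasmom nu w) (p : {poly R}) :
  nu.-integrable setT (EFin \o (fun x => p.[x])) /\
  (\int[nu]_x (p.[x])%:E = (mom w p)%:E)%E.
Proof.
have E : (fun x => (p.[x])%:E) = (fun x => \sum_(i < size p) ((p`_i)%:E * (x ^+ i)%:E))%E.
  by apply: funext => x; rewrite horner_coef sumEFin.
split.
  rewrite /comp E; apply: integrable_sum => // i _; apply: integrableZl => //.
  exact: (H i).1.
rewrite E integral_sum //; last first.
  by move=> i; apply: integrableZl => //; exact: (H i).1.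
rewrite /mom -sumEFin; apply: eq_bigr => i _.
by rewrite integralZl //; [rewrite (H i).2 EFinM | exact: (H i).1].
Qed.

Lemma Rint_poly nu w (H : hasmom nu w) (p : {poly R}) :
  Rintegral nu setT (fun x => p.[x]) = mom w p.
Proof. by rewrite /Rintegral (poly_int H p).2. Qed.

Lemma hasmom_T nu w (H : hasmom nu w) : nu setT = (w 0%N)%:E.
Proof.
rewrite -(H 0%N).2.
under eq_integral do rewrite expr0.
by rewrite integral_cst // mul1e.
Qed.

Lemma hasmom_fin nu w (H : hasmom nu w) A : measurable A -> nu A \is a fin_num.
Proof.
move=> mA; rewrite ge0_fin_numE //; apply: (le_lt_trans (le_measure _ _ _ (subsetT A))).
- by rewrite inE.
- by rewrite inE.
have E := hasmom_T H. rewrite -[X in (X < _)%E]/(nu setT) E ltry //.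
Qed.

Lemma point_lb nu w (H : hasmom nu w) (p : {poly R}) (t : R) :
  p.[t] ^+ 2 * fine (nu [set t]) <= Rintegral nu setT (fun x => (p * p).[x]).
Proof.
have [ip _] := poly_int H (p * p).
have /integrableP[mf _] := ip.
rewrite /Rintegral -lee_fin fineK; last exact: integrable_fin_num.
apply: (@le_trans _ _ (\int[nu]_(x in [set t]) ((p * p).[x])%:E)%E).
  have -> : (\int[nu]_(x in [set t]) ((p * p).[x])%:E =
             \int[nu]_(x in [set t]) (cst ((p * p).[t])%:E) x)%E.
    by apply: eq_integral => x; rewrite inE => ->.
  rewrite integral_cst // hornerM expr2 EFinM fineK //.
  exact: hasmom_fin.
apply: ge0_subset_integral => //.
by move=> x _; rewrite hornerM lee_fin -expr2 sqr_ge0.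
Qed.
End Meas.

Section Key.
Variables (R : realType) (V : eqType) (N : V -> seq V) (u : V) (theta : R).
Variables (nuG : {measure set R -> \bar R}) (nuGu : V -> {measure set R -> \bar R}).
Hypothesis uN : u \notin N u.
Hypothesis HG : is_matching_measure N u nuG.
Hypothesis HGu : forall v, v \in N u -> is_matching_measure (del_vertex N u) v (nuGu v).

Definition mm k : R := (ptree_moment N u k)%:R.
Definition ms v k : R := (ptree_moment (del_vertex N u) v k)%:R.
Definition ss k : R := \sum_(v <- N u) ms v k.
Definition cc : R := \sum_(v <- N u) fine (nuGu v [set theta]).

Lemma mm0 : mm 0 = 1.
Proof. by rewrite /mm /ptree_moment /= eqxx. Qed.

Lemma mmrec a : mm a.+1 = \sum_(j < a) mm j * ss (a.-1 - j).
Proof.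
rewrite /mm mom_rec // natr_sum; apply: eq_bigr => j _.
by rewrite natrM /ss natr_sum.
Qed.

Lemma HGm : hasmom nuG mm.
Proof. exact: HG. Qed.

Lemma key (p : {poly R}) :
  cc * mom mm p ^+ 2 <= mom mm ((('X - theta%:P) * p) * (('X - theta%:P) * p)).
Proof.
set q := ('X - theta%:P) * p.
rewrite (core2 mm0 mmrec q) /ss mom_wsum.
apply: (@le_trans _ _ (\sum_(v <- N u) mom (ms v) (rp mm q * rp mm q))); last first.
  by rewrite lerDr sqr_ge0.
rewrite /cc mulr_suml big_seq [leRHS]big_seq; apply: ler_sum => v vN.
rewrite -(Rint_poly (HGu vN)) mulrC -(rp_theta mm theta p).
exact: point_lb (HGu vN) _ _.
Qed.
End Key.
End PC.
Import PC.

Module PE.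
Set Implicit Arguments. Unset Strict Implicit. Unset Printing Implicit Defensive.
Section Supp.
Variables (R : realType) (V : eqType) (N : V -> seq V) (u : V) (D : nat).
Variable (nuG : {measure set R -> \bar R}).
Hypothesis ND : forall v, (size (N v) <= D)%N.
Hypothesis HG : is_matching_measure N u nuG.

Definition B1 : R := 2 * (D.+1)%:R.
Definition SS : set R := `]- B1, B1[%classic.

Lemma mSS : measurable SS.
Proof. exact: measurable_itv. Qed.

Lemma markov_step k : ((B1 ^+ (2 * k))%:E * nuG (~` SS) <= ((D.+1)%:R ^+ (2 * k) : R)%:E)%E.
Proof.
have mC : measurable (~` SS) by apply: measurableC; exact: mSS.
have [iT _] := HG (2 * k)%N.
have /integrableP[mfT _] := iT.
rewrite -integral_cst //.
apply: (@le_trans _ _ (\int[nuG]_(x in ~` SS) (x ^+ (2 * k))%:E)%E).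
  apply: ge0_le_integral => //.
  - by move=> x _; rewrite lee_fin exprn_ge0 // /B1 mulr_ge0.
  - exact: measurable_funS mfT.
  move=> x; rewrite /SS /= => /negP; rewrite in_itv /= negb_and -!leNgt => H.
  rewrite lee_fin !exprM; apply: lerXn2r; rewrite ?nnegrE ?sqr_ge0 //.
  have B0 : 0 <= B1 by rewrite /B1 mulr_ge0.
  by case/orP: H => H; nra.
apply: (@le_trans _ _ (\int[nuG]_x (x ^+ (2 * k))%:E)%E).
  apply: ge0_subset_integral => //.
  by move=> x _; rewrite lee_fin exprM exprn_ge0 // sqr_ge0.
rewrite (HG (2 * k)%N).2 lee_fin -natrX ler_nat.
exact: walks_bound.
Qed.

Lemma supp0 : nuG (~` SS) = 0%E.
Proof.
have mC : measurable (~` SS) by apply: measurableC; exact: mSS.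
have fin : nuG (~` SS) \is a fin_num := hasmom_fin HG mC.
set a := fine (nuG (~` SS)).
have a0 : 0 <= a by apply: fine_ge0; exact: measure_ge0.
have H k : a * (k.+1)%:R <= 1.
  have := markov_step k; rewrite -(fineK fin) -EFinM lee_fin -/a.
  rewrite /B1 exprMn [2 ^+ _]exprM => h.
  have Dp : 0 < (D.+1)%:R ^+ (2 * k) :> R by rewrite exprn_gt0 // ltr0n.
  have h4 : (k.+1)%:R <= (2 ^+ 2) ^+ k :> R.
    by rewrite -natrX -natrX ler_nat; exact: ltn_expl.
  have : a * (2 ^+ 2) ^+ k <= 1.
    rewrite -(ler_pM2r Dp) mul1r -mulrA; move: h; by rewrite mulrC.
  by apply: le_trans; rewrite ler_wpM2l.
suff a_0 : a = 0 by rewrite -(fineK fin) -/a a_0.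
apply/eqP; rewrite eq_le a0 andbT; apply/negP => /negP; rewrite -ltNge => apos.
have := H (Num.bound a^-1).
have ai : 0 <= a^-1 by rewrite invr_ge0 ltW.
have := archi_boundP ai.
move=> hb; rewrite leNgt => /negP; apply.
rewrite -(ltr_pM2l apos) mulrV ?unitfE ?gt_eqF // in hb.
by apply: (lt_le_trans hb); rewrite ler_wpM2l // ler_nat.
Qed.
End Supp.

Section Final.
Variables (R : realType) (V : eqType) (N : V -> seq V) (u : V) (D : nat) (theta : R).
Variables (nuG : {measure set R -> \bar R}) (nuGu : V -> {measure set R -> \bar R}).
Hypothesis uN : u \notin N u.
Hypothesis ND : forall v, (size (N v) <= D)%N.
Hypothesis HG : is_matching_measure N u nuG.
Hypothesis HGu : forall v, v \in N u -> is_matching_measure (del_vertex N u) v (nuGu v).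
Hypothesis ccpos : 0 < cc N u theta nuGu.

Lemma Rint_S (p : {poly R}) :
  Rintegral nuG setT (fun x => p.[x]) = Rintegral nuG (SS D) (fun x => p.[x]).
Proof.
have [ip _] := poly_int HG p.
have mC : measurable (~` SS D) := measurableC (@mSS R D).
rewrite -(setUCr (SS D)) Rintegral_setU //; last first.
- by rewrite disj_set2E setICr.
- by rewrite setUCr.
- exact: mSS.
rewrite [X in _ + X = _]/Rintegral null_set_integral ?addr0 //.
- by case/integrableP: ip => mf _; exact: measurable_funS mf.
exact: (supp0 ND HG).
Qed.

Lemma half_bound (p : {poly R}) eps :
  (forall x, 0 <= p.[x]) -> (forall x, theta - eps <= x <= theta + eps -> 2^-1 <= p.[x]) ->
  fine (nuG `[theta - eps, theta + eps]%classic) <= 2 * mom (mm R N u) p.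
Proof.
move=> P1 P3.
set I := `[theta - eps, theta + eps]%classic.
have mI : measurable I by exact: measurable_itv.
have finI := hasmom_fin HG mI.
have [ip iE] := poly_int HG p.
have /integrableP[mf _] := ip.
rewrite -ler_pdivrMl // -lee_fin -iE.
rewrite EFinM (fineK finI) -integral_cst //.
apply: (@le_trans _ _ (\int[nuG]_(x in I) (p.[x])%:E)%E).
  apply: ge0_le_integral => //.
  - by move=> x _; rewrite lee_fin invr_ge0.
  - exact: measurable_funS mf.
apply: ge0_subset_integral => //.
by move=> x _; rewrite lee_fin.
Qed.

Lemma J_bound (p : {poly R}) c : 0 <= c ->
  (forall x, SS D x -> ((('X - theta%:P) * p) * (('X - theta%:P) * p)).[x] <= c * p.[x]) ->
  (forall x, 0 <= p.[x]) -> cc N u theta nuGu * mom (mm R N u) p <= c.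
Proof.
move=> c0 P2 P1.
set q := ('X - theta%:P) * p.
have J0 : 0 <= mom (mm R N u) p.
  rewrite -(Rint_poly HG); exact: Rintegral_ge0.
have hk := key theta uN HGu p.
have hQ : mom (mm R N u) (q * q) <= c * mom (mm R N u) p.
  rewrite -momZ -!(Rint_poly HG) !Rint_S.
  have [iq _] := poly_int HG (q * q).
  have [icp _] := poly_int HG (c *: p).
  apply: le_Rintegral => //; first exact: mSS.
  - by apply: integrableS iq => //; exact: mSS.
  - by apply: integrableS icp => //; exact: mSS.
  by move=> x xS; rewrite hornerZ; apply: P2.
have [->|Jne] := eqVneq (mom (mm R N u) p) 0; first by rewrite mulr0.
have Jpos : 0 < mom (mm R N u) p by rewrite lt_neqAle eq_sym Jne.
rewrite -(ler_pM2r Jpos) -mulrA -expr2.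
exact: le_trans hk hQ.
Qed.

Lemma main_bound eps : 0 < eps -> 4 * eps <= B1 R D + `|theta| ->
  fine (nuG `[theta - eps, theta + eps]%classic) <= 6 * eps ^+ 2 / cc N u theta nuGu.
Proof.
move=> e0 eL.
set L := B1 R D + `|theta|.
have B0 : 0 < B1 R D by rewrite /B1 mulr_gt0 // ltr0n.
have L0 : 0 < L by rewrite /L; apply: (lt_le_trans B0); rewrite lerDl normr_ge0.
rewrite -/L in eL.
have e20 : 0 < eps ^+ 2 by rewrite exprn_gt0.
have L2e : 16 * eps ^+ 2 <= L ^+ 2.
  have : (4 * eps) ^+ 2 <= L ^+ 2.
    by apply: lerXn2r; rewrite // nnegrE ?mulr_ge0 ?ltW.
  by rewrite exprMn; apply: le_trans; rewrite -natrX.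
set X := L ^+ 2 / (4 * eps ^+ 2).
have XE : L ^+ 2 = 4 * eps ^+ 2 * X by rewrite /X mulrC divfK // mulf_neq0 // gt_eqF.
have X4 : 4 <= X.
  have : 4 * eps ^+ 2 * 4 <= 4 * eps ^+ 2 * X by rewrite -XE; lra.
  by rewrite ler_pM2l // mulr_gt0.
have [HM1 HM2] := andP (truncn_itv (le_trans (ler0n _ 4) X4)).
set M := Num.truncn X in HM1 HM2.
set n := (2 * M)%N.
have nR : n%:R = 2 * M%:R :> R by rewrite natrM.
have MS : M.+1%:R = M%:R + 1 :> R by rewrite -natr1.
have npos : 0 < n%:R :> R by rewrite nR; lra.
have n2X : n%:R <= 2 * X :> R by rewrite nR; lra.
have n15 : 3 / 2 * X <= n%:R :> R by rewrite nR; lra.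
set a := (L ^+ 2)^-1.
have a0 : 0 <= a by rewrite invr_ge0 exprn_ge0 // ltW.
have aL : a * L ^+ 2 = 1 by rewrite mulVf // gt_eqF // exprn_gt0.
set p : {poly R} := (1 - ('X - theta%:P) ^+ 2 * a%:P) ^+ n.
have pE x : p.[x] = (1 - (x - theta) ^+ 2 * a) ^+ n.
  by rewrite /p horner_exp !hornerE.
have P1 x : 0 <= p.[x] by rewrite pE /n exprM exprn_ge0 // sqr_ge0.
set c := L ^+ 2 / n%:R.
have c0 : 0 <= c by rewrite /c divr_ge0 // ?exprn_ge0 ?ltW.
have P2 : forall x, SS D x ->
    ((('X - theta%:P) * p) * (('X - theta%:P) * p)).[x] <= c * p.[x].
  move=> x; rewrite /SS /= in_itv /= => /andP[xl xr].
  have xt : (x - theta) ^+ 2 <= L ^+ 2.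
    rewrite -real_normK ?num_real //; apply: lerXn2r; rewrite ?nnegrE ?normr_ge0 ?ltW //.
    apply: (le_lt_trans (ler_normB _ _)); rewrite /L ltrD2r.
    by rewrite ltr_norml xl xr.
  set y := (x - theta) ^+ 2 * a.
  have y0 : 0 <= y by rewrite mulr_ge0 // sqr_ge0.
  have y1 : y <= 1 by rewrite /y -aL [leRHS]mulrC; apply: ler_wpM2r.
  have yE : (x - theta) ^+ 2 = L ^+ 2 * y by rewrite /y mulrCA [L ^+ 2 * a]mulrC aL mulr1.
  have hb := @bern2 _ y n (introT andP (conj y0 y1)).
  set z := (1 - y) ^+ n in hb.
  have z0 : 0 <= z by rewrite exprn_ge0 // subr_ge0.
  rewrite !hornerM hornerD hornerN hornerX hornerC pE -/y -/z.
  have -> : (x - theta) * z * ((x - theta) * z) = (L ^+ 2 * z / n%:R) * (n%:R * y * z).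
    have -> : (L ^+ 2 * z / n%:R) * (n%:R * y * z) = L ^+ 2 * y * z * z.
      by field; rewrite gt_eqF.
    by rewrite -yE; ring.
  rewrite /c [leRHS]mulrAC -[leRHS]mulr1; apply: ler_wpM2l => //.
  by apply: divr_ge0; [apply: mulr_ge0 => //; exact: exprn_ge0 (ltW L0) | exact: ltW npos].
have P3 : forall x, theta - eps <= x <= theta + eps -> 2^-1 <= p.[x].
  move=> x /andP[xl xr].
  have xt : (x - theta) ^+ 2 <= eps ^+ 2 by nra.
  set y := (x - theta) ^+ 2 * a.
  have y0 : 0 <= y by rewrite mulr_ge0 // sqr_ge0.
  have ye : y <= eps ^+ 2 * a by apply: ler_wpM2r.
  have eaE : 2 * X * (eps ^+ 2 * a) = 2^-1.
    rewrite /a XE; field; rewrite ?gt_eqF //.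
    lra.
  have ny : n%:R * y <= 2^-1.
    rewrite -eaE; apply: le_trans (ler_wpM2l (ltW npos) ye) _.
    by rewrite ler_wpM2r // mulr_ge0 // ?ltW.
  have y1 : y <= 1.
    have n1 : 1 <= n%:R :> R by lra.
    nra.
  rewrite pE -/y; apply: le_trans (@bern_lo _ y n (introT andP (conj y0 y1))); lra.
have hJ := J_bound c0 P2 P1.
have hh := half_bound P1 P3.
have c3 : c <= 3 * eps ^+ 2.
  rewrite /c ler_pdivrMr // XE; nra.
have ccp := ccpos.
rewrite ler_pdivlMr // (mulrC 6) -mulrA; apply: le_trans (ler_wpM2r (ltW ccp) hh) _.
have h := le_trans hJ c3; rewrite expr2 in h; nra.
Qed.
End Final.
End PE.
Import PE.

Unset Implicit Arguments. Set Strict Implicit. Set Printing Implicit Defensive.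

Theorem proposition7p6 (R : realType) (V : eqType) (N : V -> seq V) (D : nat)
  (theta : R) (u : V)
  (nuG : {measure set R -> \bar R})
  (nuGu : V -> {measure set R -> \bar R}) :
  simple_graph N ->
  (forall v, size (N v) <= D)%N ->
  is_matching_measure N u nuG ->
  (forall v, v \in N u -> is_matching_measure (del_vertex N u) v (nuGu v)) ->
  (0 < \sum_(v <- N u) nuGu v [set theta])%E ->
  (fun eps : R =>
     (fine (nuG `[theta - eps, theta + eps]%classic) - fine (nuG [set theta])) / eps)
    @ 0^'+ --> 0.
Proof.
move=> [_ Nirr _] ND HG HGu hpos.
have uN : u \notin N u := Nirr u.
have ccpos : 0 < cc N u theta nuGu.
  have E : (\sum_(v <- N u) nuGu v [set theta])%E = (cc N u theta nuGu)%:E.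
    rewrite /cc -sumEFin big_seq [RHS]big_seq; apply: eq_bigr => v vN.
    rewrite fineK //; apply: (hasmom_fin (HGu v vN)).
    exact: measurable_set1.
  by rewrite E lte_fin in hpos.
set cc' := cc N u theta nuGu in ccpos *.
set L := B1 R D + `|theta|.
have L0 : 0 < L.
  apply: (@lt_le_trans _ _ (B1 R D)); first by rewrite /B1 mulr_gt0 // ltr0n.
  by rewrite lerDl normr_ge0.
apply/cvgrPdist_le => e e0.
have L4 : 0 < L / 4 by rewrite divr_gt0.
have ec : 0 < e * cc' / 6 by rewrite divr_gt0 // mulr_gt0.
near=> eps.
have e0' : 0 < eps by near: eps; exact: nbhs_right_gt.
have eL : eps <= L / 4 by near: eps; exact: nbhs_right_le.
have ee : eps <= e * cc' / 6 by near: eps; exact: nbhs_right_le.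
have eL4 : 4 * eps <= B1 R D + `|theta| by rewrite -/L; lra.
have mb := main_bound uN ND HG HGu ccpos e0' eL4.
set A := fine _ in mb *.
set b := fine (nuG [set theta]).
have bA : b <= A.
  apply: fine_le.
  - exact: (hasmom_fin HG (measurable_set1 theta)).
  - by apply: (hasmom_fin HG); exact: measurable_itv.
  apply: le_measure; rewrite ?inE //.
  by move=> x /= ->; rewrite /= in_itv /=; apply/andP; split; lra.
have b0 : 0 <= b by apply: fine_ge0; exact: measure_ge0.
have ee' : 6 * eps <= e * cc' by move: ee; rewrite ler_pdivlMr //; lra.
have h1 : 6 * eps ^+ 2 / cc' <= e * eps.
  by rewrite ler_pdivrMr // expr2; nra.
rewrite sub0r normrN ger0_norm; last by rewrite divr_ge0 // ?subr_ge0 // ltW.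
rewrite ler_pdivrMr //; lra.
Unshelve. all: end_near.
Qed.
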